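(* Let $J\subseteq S$. For any $w\in\mathfrak{S}_n^J$ there is a unique minimal $(J,132)$-avoiding permutation $w'\in\mathfrak{S}_n^J$ with $w\le_S w'$; that is, $w'$ is $(J,132)$-avoiding, $w\le_S w'$, and $w'\le_S v$ for every $(J,132)$-avoiding $v\in\mathfrak{S}_n^J$ with $w\le_S v$.
   Context: $\mathfrak{S}_n$ is the symmetric group on $[n]$, $s_i=(i,i+1)$, $S=\{s_1,\dots,s_{n-1}\}$, one-line notation $w=w_1\cdots w_n$, $\mathrm{inv}(w)=\{(i,j):i<j,\ w_i>w_j\}$, weak order $u\le_S v\iff\mathrm{inv}(u)\subseteq\mathrm{inv}(v)$. For $J\subseteq S$, $\mathfrak{S}_n^J$ is the set of $w$ with $w_i<w_{i+1}$ whenever $s_i\in J$. Writing $J=S\setminus\{s_{j_1},\dots,s_{j_r}\}$ with $j_1<\dots<j_r$, the $J$-regions are $\{1,\dots,j_1\},\{j_1+1,\dots,j_2\},\dots,\{j_r+1,\dots,n\}$. An element $w\in\mathfrak{S}_n^J$ has a $(J,132)$-pattern if there are indices $i<j<k$ in pairwise different $J$-regions with $w_i<w_k<w_j$ and $w_k=w_i+1$; otherwise it is $(J,132)$-avoiding. *)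

(* Defs.v *)
From mathcomp Require Import all_boot all_order all_fingroup.
Set Implicit Arguments. Unset Strict Implicit. Unset Printing Implicit Defensive.

(* Conventions (0-based): the symmetric group S_n is 'S_n = {perm 'I_n};
   positions and values are 0,...,n-1 (the paper's i corresponds to i-1).
   A simple reflection s_{k+1} = (k+1,k+2) (1-based) is encoded by
   k : 'I_(n.-1), i.e. it swaps 0-based positions k and k+1.
   Hence J subseteq S is a set J : {set 'I_(n.-1)}. *)

Definition inv_set n (w : 'S_n) : {set 'I_n * 'I_n} :=
  [set p : 'I_n * 'I_n | (p.1 < p.2) && (w p.2 < w p.1)].

Definition weak_le n (u v : 'S_n) : bool := inv_set u \subset inv_set v.

Definition in_SJ n (J : {set 'I_(n.-1)}) (w : 'S_n) : bool :=
  [forall k : 'I_(n.-1), (k \in J) ==>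
     [forall a : 'I_n, forall b : 'I_n,
        ((a : nat) == k) && ((b : nat) == k.+1) ==> (w a < w b)]].

Definition same_region n (J : {set 'I_(n.-1)}) (a b : nat) : bool :=
  [forall k : 'I_(n.-1), ((minn a b <= k) && (k < maxn a b)) ==> (k \in J)].

Definition has_J132 n (J : {set 'I_(n.-1)}) (w : 'S_n) : bool :=
  [exists i : 'I_n, exists j : 'I_n, exists k : 'I_n,
     [&& i < j, j < k,
         ~~ same_region J i j, ~~ same_region J j k, ~~ same_region J i k,
         w i < w k, w k < w j & (w k : nat) == (w i).+1]].

Definition J132_avoiding n (J : {set 'I_(n.-1)}) (w : 'S_n) : bool :=
  ~~ has_J132 J w.

(* Main.v *)
Require Import Defs.
From mathcomp Require Import all_boot all_order all_fingroup zify.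
Set Implicit Arguments. Unset Strict Implicit. Unset Printing Implicit Defensive.

Lemma card_lt_ord n m : m <= n -> #|[pred x : 'I_n | x < m]| = m.
Proof.
move=> le_mn.
have H : #|image (widen_ord le_mn) 'I_m| = m.
  rewrite card_image ?card_ord //.
  by move=> a b /(congr1 val) /= /val_inj.
rewrite -[RHS]H; apply: eq_card => x; rewrite inE; apply/idP/idP.
  move=> xm; apply/imageP; exists (Ordinal xm) => //; exact: val_inj.
by case/imageP => y _ ->; rewrite /= ltn_ord.
Qed.

Lemma perm_val_card n (u : 'S_n) p : (u p : nat) = #|[pred q | u q < u p]|.
Proof.
set m := (u p : nat).
have Hm : #|[pred x : 'I_n | x < m]| = m by apply: card_lt_ord; exact: ltnW (ltn_ord _).
have Hi : #|image u [pred q | u q < m]| = #|[pred q | u q < m]| by apply: card_image; exact: perm_inj.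
rewrite -[LHS]Hm -Hi; apply: eq_card => x; rewrite !inE; apply/idP/imageP.
  move=> h; exists ((u^-1)%g x); rewrite ?inE permKV //.
by case=> y Hy ->.
Qed.

Lemma lt_inv n (u : 'S_n) p q :
  (u q < u p) = if p < q then (p, q) \in inv_set u
                else if q < p then (q, p) \notin inv_set u else false.
Proof.
rewrite !inE /=.
case: (ltngtP p q) => [pq|qp|pq]; rewrite /=.
- by [].
- have : u p != u q by rewrite (inj_eq perm_inj); apply/eqP => E; move: qp; rewrite E ltnn.
  rewrite -(inj_eq val_inj) /=; move: qp; lia.
- have E : q = p by apply: ord_inj; rewrite pq.
  by rewrite E ltnn.
Qed.

Lemma inv_inj n (u v : 'S_n) : inv_set u = inv_set v -> u = v.
Proof.
move=> E; apply/permP => p; apply: ord_inj.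
rewrite (perm_val_card u p) (perm_val_card v p); apply: eq_card => q; rewrite !inE.
by rewrite (lt_inv u) (lt_inv v) E.
Qed.

Lemma ord_neq n (x y : 'I_n) : x <> y -> (x : nat) <> y.
Proof. by move=> H E; apply: H; apply: ord_inj. Qed.

Lemma tperm_lt n (a b x y : 'I_n) : (b : nat) = a.+1 ->
  ~ (x = a /\ y = b) -> ~ (x = b /\ y = a) ->
  (tperm a b x < tperm a b y) = (x < y).
Proof.
move=> hb h1 h2.
case: (tpermP a b x) => [ex|ex|/ord_neq nxa /ord_neq nxb];
case: (tpermP a b y) => [ey|ey|/ord_neq nya /ord_neq nyb];
rewrite ?ex ?ey; try (exfalso; by [apply: h1|apply: h2]); try lia.
Qed.

Definition bump_perm n (w : 'S_n) (i k : 'I_n) : 'S_n := (w * tperm (w i) (w k))%g.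

Lemma inv_bump n (w : 'S_n) (i k : 'I_n) :
  i < k -> (w k : nat) = (w i).+1 ->
  inv_set (bump_perm w i k) = inv_set w :|: [set (i, k)].
Proof.
move=> ik wk; apply/setP => [[p q]]; rewrite !inE /= /bump_perm !permM /=.
case: (eqVneq (p, q) (i, k)) => [[-> ->]|neq] /=.
  by rewrite tpermL tpermR ik wk ltnSn orbT.
rewrite orbF.
case: (ltnP p q) => pq //=.
rewrite tperm_lt //.
- case=> /perm_inj E1 /perm_inj E2; move: pq; rewrite E1 E2; move: ik; lia.
- by case=> /perm_inj E1 /perm_inj E2; move: neq; rewrite E1 E2 eqxx.
Qed.

Lemma lt_notinv n (u : 'S_n) (a b : 'I_n) : a < b -> (u a < u b) = ((a, b) \notin inv_set u).
Proof.
move=> ab; rewrite inE /= ab /=.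
have : u a != u b by rewrite (inj_eq perm_inj); apply/eqP => E; move: ab; rewrite E ltnn.
rewrite -(inj_eq val_inj) /=; lia.
Qed.

Lemma SJ_bump n (J : {set 'I_n.-1}) (w : 'S_n) (i j k : 'I_n) :
  i < j -> j < k -> (w k : nat) = (w i).+1 -> in_SJ J w -> in_SJ J (bump_perm w i k).
Proof.
move=> ij jk wki /forallP H; apply/forallP => t; apply/implyP => tJ.
apply/forallP => a; apply/forallP => b; apply/implyP => /andP [/eqP ha /eqP hb].
have ab : a < b by lia.
rewrite lt_notinv // inv_bump ?(ltn_trans ij jk) // in_setU in_set1 negb_or.
apply/andP; split.
  rewrite -lt_notinv //.
  move: (H t); rewrite tJ /= => /forallP /(_ a) /forallP /(_ b).
  by rewrite ha hb !eqxx.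
apply/negP => /eqP [Ea Eb]; move: ha hb; rewrite Ea Eb; lia.
Qed.

Lemma region_mono n (J : {set 'I_n.-1}) (x y x' y' : nat) :
  x' <= x -> x <= y -> y <= y' -> ~~ same_region J x y -> ~~ same_region J x' y'.
Proof.
move=> h1 h2 h3 /forallPn [t]; rewrite negb_imply => /andP [/andP [t1 t2] tJ].
apply/forallPn; exists t; rewrite negb_imply tJ andbT.
move: t1 t2; lia.
Qed.

Lemma weak_le_lt n (w v : 'S_n) (p q : 'I_n) :
  weak_le w v -> p < q -> v p < v q -> w p < w q.
Proof.
move=> /subsetP H pq; rewrite !lt_notinv // => h; apply/negP => /H hin.
by rewrite hin in h.
Qed.

Lemma weak_le_gt n (w v : 'S_n) (p q : 'I_n) :
  weak_le w v -> p < q -> w q < w p -> v q < v p.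
Proof.
move=> /subsetP H pq h.
have : (p, q) \in inv_set w by rewrite inE /= pq h.
by move/H; rewrite inE /= => /andP [].
Qed.

Lemma key n (J : {set 'I_n.-1}) (w v : 'S_n) (i j k : 'I_n) :
  i < j -> j < k -> ~~ same_region J i j -> ~~ same_region J j k ->
  w k < w j -> (w k : nat) = (w i).+1 -> weak_le w v -> J132_avoiding J v ->
  v k < v i.
Proof.
move=> ij jk rij rjk wkj wki le av.
have ik : i < k by apply: ltn_trans ij jk.
rewrite ltnNge leq_eqVlt negb_or; apply/andP; split.
  apply/negP => /eqP E; have Eik : i = k.
    by apply: perm_inj; first [exact: E | exact: (ord_inj E)].
  by move: ik; rewrite Eik ltnn.
apply/negP => vik.
have vkj : v k < v j := weak_le_gt le jk wkj.
have Pi0 : (fun p : 'I_n => (p <= i) && (v p < v k)) i by rewrite /= leqnn vik.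
have [p /andP [pi vpk] pmax] := @arg_maxnP _ i (fun p : 'I_n => (p <= i) && (v p < v k)) (fun p => nat_of_ord (v p)) Pi0.
have vip : v i <= v p by apply: (pmax i Pi0).
have xn : (v p).+1 < n by apply: leq_ltn_trans vpk (ltn_ord _).
set r := ((v^-1)%g (Ordinal xn)).
have vr : (v r : nat) = (v p).+1 by rewrite /r permKV.
have kr : k <= r.
  rewrite leqNgt; apply/negP => rk.
  have nrk : (v r : nat) != v k.
    apply/eqP => E; have Erk := perm_inj (ord_inj E).
    by move: rk; rewrite Erk ltnn.
  have vrk : v r < v k by lia.
  case: (leqP r i) => ri.
    have : v r <= v p by apply: pmax; rewrite /= ri vrk.
    lia.
  have wir : w i < w r by apply: weak_le_lt le ri _; lia.
  have wrk : w r < w k by apply: weak_le_lt le rk vrk.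
  lia.
move/negP: av; apply; apply/existsP; exists p; apply/existsP; exists j; apply/existsP; exists r.
have pj : p < j by lia.
have jr : j < r by lia.
rewrite pj jr /=.
rewrite (region_mono pi (ltnW ij) (leqnn _) rij) /=.
rewrite (region_mono (leqnn _) (ltnW jk) kr rjk) /=.
rewrite (region_mono pi (ltnW ij) (ltnW jr) rij) /=.
apply/andP; split; first lia.
apply/andP; split; first lia.
by rewrite vr.
Qed.

Lemma exists_min n (J : {set 'I_n.-1}) m (w : 'S_n) :
  #|~: inv_set w| < m -> in_SJ J w ->
  exists w', [/\ in_SJ J w', J132_avoiding J w', weak_le w w' &
    forall v : 'S_n, in_SJ J v -> J132_avoiding J v -> weak_le w v -> weak_le w' v].
Proof.
elim: m w => // m IH w hm hw.
case hav: (J132_avoiding J w).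
  by exists w; split => //; exact: subxx.
move: hav; rewrite /J132_avoiding => /negbFE /existsP [i /existsP [j /existsP [k H]]].
move: H => /andP [ij /andP [jk /andP [rij /andP [rjk /andP [rik /andP [wik /andP [wkj /eqP wki]]]]]]].
have ik : i < k by apply: ltn_trans ij jk.
have E := inv_bump ik wki.
have sub : weak_le w (bump_perm w i k) by rewrite /weak_le E subsetUl.
have nin : (i, k) \notin inv_set w by rewrite inE /= ik /= -leqNgt ltnW.
have lt : #|~: inv_set (bump_perm w i k)| < m.
  have c1 := cardsC (inv_set w).
  have c2 := cardsC (inv_set (bump_perm w i k)).
  rewrite E setUC cardsU1 nin in c2.
  rewrite E setUC; rewrite add1n in c2; move: hm c1 c2; lia.
have [w' [h1 h2 h3 h4]] := IH _ lt (SJ_bump ij jk wki hw).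
exists w'; split => //.
  exact: subset_trans sub h3.
move=> v hv av le; apply: h4 => //.
rewrite /weak_le E subUset; apply/andP; split; first exact: le.
rewrite sub1set inE /= ik /=.
exact: (key ij jk rij rjk wkj wki le av).
Qed.

Theorem lemma3p14 (n : nat) (J : {set 'I_(n.-1)}) (w : 'S_n) :
  in_SJ J w ->
  exists! w' : 'S_n,
    [/\ in_SJ J w', J132_avoiding J w', weak_le w w' &
        forall v : 'S_n, in_SJ J v -> J132_avoiding J v -> weak_le w v ->
          weak_le w' v].
Proof.
move=> hw.
have [w' [h1 h2 h3 h4]] := exists_min (ltnSn #|~: inv_set w|) hw.
exists w'; split; first by split.
move=> w'' [g1 g2 g3 g4].
apply: inv_inj; apply/eqP; rewrite eqEsubset; apply/andP; split.
  exact: h4.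
exact: g4.
Qed.
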